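(* For all positive integers $m,n$, the complete bipartite graph $K_{m,n}$ is not $(m+2)$-solvable.
   Context: An undirected graph is identified with the directed graph having both arcs $(u,v)$ and $(v,u)$ for each edge. $N^-(v)$ denotes the set of (in-)neighbours of $v$. For $q\ge2$ let $[q]=\{0,\dots,q-1\}$. A $D$-function over $[q]$ is a map $f=(f_v)_{v\in V}:[q]^V\to[q]^V$ with each $f_v(x)$ depending only on $(x_u)_{u\in N^-(v)}$. $D$ is $q$-solvable if some $D$-function $f$ over $[q]$ has the property that for every $x\in[q]^V$ there is $v$ with $f_v(x)=x_v$. *)

(* Defs.v *)
From mathcomp Require Import all_boot.
Set Implicit Arguments. Unset Strict Implicit. Unset Printing Implicit Defensive.

(* A digraph D on a finite vertex type V is given by its arc relation:
   [arc u v] means (u,v) is an arc, i.e. u \in N^-(v). *)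

Definition is_Dfunction (V : finType) (arc : rel V) (q : nat)
  (f : (V -> 'I_q) -> (V -> 'I_q)) : Prop :=
  forall (v : V) (x y : V -> 'I_q),
    (forall u, arc u v -> x u = y u) -> f x v = f y v.

Definition solvable (V : finType) (arc : rel V) (q : nat) : Prop :=
  exists f : (V -> 'I_q) -> (V -> 'I_q),
    is_Dfunction arc f /\ forall x : V -> 'I_q, exists v : V, f x v = x v.

Definition Kmn_arc (m n : nat) : rel ('I_m + 'I_n)%type :=
  fun u v => match u, v with
             | inl _, inr _ => true
             | inr _, inl _ => true
             | _, _ => false
             end.

(* Main.v *)
Require Import Defs.
From mathcomp Require Import all_boot.

Lemma avoid_seq (T : finType) (s : seq T) : size s < #|T| -> exists a, a \notin s.
Proof.
move=> hs; apply/existsP; rewrite -negb_forall; apply/negP=> /forallP H.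
have : #|T| <= size s.
  apply: leq_trans (card_size s); apply: subset_leq_card; apply/subsetP=> x _; exact: H.
by rewrite leqNgt hs.
Qed.

Theorem corollary11 (m n : nat) (hm : 0 < m) (hn : 0 < n) :
  ~ solvable (@Kmn_arc m n) m.+2.
Proof.
case=> f [Df H].
pose y (j : 'I_m.+2) : ('I_m + 'I_n)%type -> 'I_m.+2 :=
  fun v => match v with inl _ => j | inr _ => ord0 end.
pose sb (b : 'I_n) := [seq f (y (inord k)) (inr b) | k <- iota 0 m.+1].
have hxB : forall b, exists a, a \notin sb b.
  by move=> b; apply: avoid_seq; rewrite size_map size_iota card_ord.
pose xB b := xchoose (hxB b).
pose z (j : 'I_m.+2) : ('I_m + 'I_n)%type -> 'I_m.+2 :=
  fun v => match v with inl _ => j | inr b => xB b end.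
pose g a := f (z ord0) (inl a).
pose s := [seq g a | a <- enum 'I_m] ++ [:: ord_max].
have [j hj] : exists j, j \notin s.
  by apply: avoid_seq; rewrite size_cat size_map size_enum_ord card_ord addn1.
move: hj; rewrite mem_cat negb_or mem_seq1 => /andP [hj1 hj2].
have jlt : (j : nat) < m.+1.
  have := ltn_ord j; rewrite ltnS leq_eqVlt => /orP [/eqP E|//].
  by move: hj2; rewrite (_ : j = ord_max) ?eqxx //; apply: val_inj.
have [v hv] := H (z j).
case: v hv => [a|b] hv.
- have E : f (z j) (inl a) = g a by apply: Df => -[u|u] //.
  move: hv hj1; rewrite E /= => <-.
  by move/negP; apply; apply: map_f; rewrite mem_enum.
- have E : f (z j) (inr b) = f (y (inord j)) (inr b).
    apply: Df => -[u|u] //= _; apply: val_inj; by rewrite /= inordK.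
  have := xchooseP (hxB b); rewrite -/(xB b).
  have -> : xB b = f (z j) (inr b) by rewrite hv.
  rewrite E; move/negP; apply.
  by apply: map_f; rewrite mem_iota.
Qed.
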